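(* Let $\rho\colon\mathrm{Isom}(\mathbf H^1_{\mathbb C})_o\to\mathrm{Isom}(\mathbf H^\infty_{\mathbb C})_o$ be an irreducible representation and let $t\in\mathbb R$ be such that the lift $\rho(g(\lambda,0))$ satisfies $\rho(g(\lambda,0))\eta_1=\lambda^t\eta_1$ for all $\lambda>0$ (i.e. $\chi(\lambda)=\lambda^t$). Then $0<t\le2$.
   Context: $\mathcal H$: separable complex Hilbert space with strongly non-degenerate Hermitian form $B$ (linear in first variable) of signature $(1,\infty)$; $\mathbf H^\infty_{\mathbb C}=\{[v]:B(v,v)>0\}$, $\cosh d([v],[w])=|B(v,w)|/\sqrt{B(v,v)B(w,w)}$, boundary = isotropic lines. $\mathbf H^1_{\mathbb C}$: $\mathbb C^2$ with $B(z,w)=z_1\bar w_1-z_2\bar w_2$, $\xi_{1,2}=(e_1\pm e_2)/\sqrt2$; $g(\lambda,b)\in SU(1,1)$ has matrix $\begin{pmatrix}\lambda&ib\\0&\lambda^{-1}\end{pmatrix}$ in basis $(\xi_1,\xi_2)$, $P=\{g(\lambda,b)\}$. Representations are orbitally continuous; irreducible = no fixed point in $\mathbf H^\infty_{\mathbb C}\cup\partial\mathbf H^\infty_{\mathbb C}$, no invariant pair of boundary points, no proper invariant complex hyperbolic subspace. For such $\rho$: $\eta_1$ = unique common fixed boundary point of $\rho(P)$, $\eta_2$ = other endpoint of the common axis of the $\rho(g(\lambda,0))$; isotropic representatives with $B(\eta_1,\eta_2)=1$. $\rho|_P$ lifts to a continuous homomorphism $P\to U(B)$ (still denoted $\rho$)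 with $B(\rho(g(\lambda,b))\eta_1,\eta_2)>0$; then $\rho(g(\lambda,b))\eta_1=\chi(\lambda)\eta_1$ for a continuous isomorphism $\chi\colon\mathbb R_{>0}\to\mathbb R_{>0}$, so $\chi(\lambda)=\lambda^t$ for some real $t$, and $t=\ell(\rho)$ is the displacement of $\rho$. *)

(* Defs.v *)
From HB Require Import structures.
From mathcomp Require Import all_boot all_order all_algebra.
From mathcomp Require Import complex.
From mathcomp Require Import reals exp.
Set Implicit Arguments. Unset Strict Implicit. Unset Printing Implicit Defensive.
Import Order.TTheory GRing.Theory Num.Theory.
Local Open Scope ring_scope.
Local Open Scope complex_scope.

Definition hermitian_form (R : realType) (V : lmodType R[i])
    (B : V -> V -> R[i]) : Prop :=
  (forall (a : R[i]) (u v w : V), B (a *: u + v) w = a * B u w + B v w) /\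
  (forall u v : V, B v u = (B u v)^*).

(* Given a unit positive vector e (B e e = 1), the associated Hilbert
   inner product:  <u,v> = B(u_e,v_e) - B(u_perp, v_perp)
                        = 2 B(u,e) conj(B(v,e)) - B(u,v). *)
Definition hip (R : realType) (V : lmodType R[i]) (B : V -> V -> R[i])
    (e u v : V) : R[i] :=
  2%:R * B u e * (B v e)^* - B u v.

Definition hnorm (R : realType) (V : lmodType R[i]) (B : V -> V -> R[i])
    (e u : V) : R :=
  Num.sqrt (complex.Re (hip B e u u)).

(* (H, B) is a separable infinite-dimensional complex Hilbert space with a
   strongly non-degenerate Hermitian form B of signature (1, oo):
   H = C e (+) e^perp, B e e = 1, -B is positive definite on e^perp, and H is
   complete and separable for the Hilbert norm hnorm B e (the choice of e
   only changes the norm to an equivalent one). *)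
Definition sig1inf_space (R : realType) (V : lmodType R[i])
    (B : V -> V -> R[i]) (e : V) : Prop :=
  [/\ hermitian_form B,
      B e e = 1,
      (forall w : V, B w e = 0 -> w != 0 -> B w w < 0) &
      [/\
      (forall s : nat -> V,
         (forall eps : R, 0 < eps -> exists N : nat, forall m n : nat,
            (N <= m)%N -> (N <= n)%N -> hnorm B e (s m - s n) < eps) ->
         exists v : V, forall eps : R, 0 < eps -> exists N : nat,
            forall n : nat, (N <= n)%N -> hnorm B e (s n - v) < eps),
      (exists s : nat -> V, forall (v : V) (eps : R), 0 < eps ->
         exists n : nat, hnorm B e (v - s n) < eps) &
      (forall n : nat, exists f : 'I_n -> V,
         forall a : 'I_n -> R[i], \sum_(i < n) a i *: f i = 0 ->
         forall i, a i = 0)]].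

Definition posv (R : realType) (V : lmodType R[i]) (B : V -> V -> R[i])
    (v : V) : Prop := 0 < B v v.

Definition isotropic (R : realType) (V : lmodType R[i]) (B : V -> V -> R[i])
    (v : V) : Prop := v != 0 /\ B v v = 0.

Definition same_line (R : realType) (V : lmodType R[i]) (v w : V) : Prop :=
  exists c : R[i], c != 0 /\ w = c *: v.

(* cosh d([v],[w]) = |B(v,w)| / sqrt(B(v,v) B(w,w)),  d = arcosh of it *)
Definition cosh_dist (R : realType) (V : lmodType R[i]) (B : V -> V -> R[i])
    (v w : V) : R :=
  complex.Re `|B v w| / Num.sqrt (complex.Re (B v v) * complex.Re (B w w)).

Definition hdist (R : realType) (V : lmodType R[i]) (B : V -> V -> R[i])
    (v w : V) : R :=
  let c := cosh_dist B v w in ln (c + Num.sqrt (c ^+ 2 - 1)).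

Definition unitaryB (R : realType) (V : lmodType R[i]) (B : V -> V -> R[i])
    (f : V -> V) : Prop :=
  [/\ (forall (a : R[i]) (u v : V), f (a *: u + v) = a *: f u + f v),
      (forall u v : V, B (f u) (f v) = B u v) &
      (forall w : V, exists u : V, f u = w)].

Definition mx2 (R : realType) (a b c d : R[i]) : 'M[R[i]]_2 :=
  \matrix_(i < 2, j < 2)
    if (i : nat) == 0%N then (if (j : nat) == 0%N then a else b)
    else (if (j : nat) == 0%N then c else d).

(* Gram matrix of B(z,w) = z1 conj(w1) - z2 conj(w2) in the basis (e1,e2) *)
Definition J11 (R : realType) : 'M[R[i]]_2 := mx2 1 0 0 (-1).

Definition SU11 (R : realType) (g : 'M[R[i]]_2) : Prop :=
  \det g = 1 /\ (map_mx Num.conj g)^T *m J11 R *m g = J11 R.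

(* change of basis from (xi1, xi2) to (e1, e2), xi_{1,2} = (e1 +- e2)/sqrt 2 *)
Definition Qxi (R : realType) : 'M[R[i]]_2 :=
  let s := (Num.sqrt 2 : R)^-1 in mx2 s%:C s%:C s%:C (- s%:C).

(* g(lambda, b): matrix [[lambda, i b],[0, lambda^-1]] in the basis (xi1,xi2),
   written in the basis (e1,e2). *)
Definition gP (R : realType) (l b : R) : 'M[R[i]]_2 :=
  Qxi R *m mx2 l%:C ('i * b%:C) 0 (l^-1)%:C *m (Qxi R)^-1.

Definition mx_close (R : realType) (g h : 'M[R[i]]_2) (d : R) : Prop :=
  forall i j : 'I_2, complex.Re `|g i j - h i j| < d.

(* rho g : V -> V is a unitary representative of the class rho(g) in PU(B). *)
Definition proj_rep (R : realType) (V : lmodType R[i]) (B : V -> V -> R[i])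
    (rho : 'M[R[i]]_2 -> V -> V) : Prop :=
  [/\ (forall g, SU11 g -> unitaryB B (rho g)),
      (forall g h, SU11 g -> SU11 h -> exists c : R[i],
         `|c| = 1 /\ forall v, rho (g *m h) v = c *: rho g (rho h v)) &
      (* factors through PSU(1,1) = SU(1,1)/{+-1} *)
      (exists c : R[i], forall v, rho (- 1%:M) v = c *: v)].

Definition orbitally_continuous (R : realType) (V : lmodType R[i])
    (B : V -> V -> R[i]) (rho : 'M[R[i]]_2 -> V -> V) : Prop :=
  forall (x : V) (g0 : 'M[R[i]]_2), posv B x -> SU11 g0 ->
  forall eps : R, 0 < eps -> exists2 del : R, 0 < del &
    forall g, SU11 g -> mx_close g g0 del ->
      hdist B (rho g x) (rho g0 x) < eps.

Definition irreducible_rep (R : realType) (V : lmodType R[i])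
    (B : V -> V -> R[i]) (e : V) (rho : 'M[R[i]]_2 -> V -> V) : Prop :=
  [/\ (* no fixed point in H^oo_C or in its boundary *)
      ~ (exists v : V, (posv B v \/ isotropic B v) /\
           forall g, SU11 g -> same_line v (rho g v)),
      (* no invariant pair of boundary points *)
      ~ (exists v w : V, [/\ isotropic B v, isotropic B w, ~ same_line v w &
           forall g, SU11 g ->
             (same_line v (rho g v) /\ same_line w (rho g w)) \/
             (same_line w (rho g v) /\ same_line v (rho g w))]) &
      (* no proper invariant complex hyperbolic subspace, i.e. no closed
         complex linear subspace L containing a positive vector, L <> H,
         with rho(g) L = L *)
      ~ (exists L : V -> Prop,
           [/\ L 0,
               (forall (a : R[i]) u v, L u -> L v -> L (a *: u + v)) &
            [/\
               (forall (s : nat -> V) (v : V), (forall n, L (s n)) ->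
                  (forall eps : R, 0 < eps -> exists N : nat, forall n : nat,
                     (N <= n)%N -> hnorm B e (s n - v) < eps) -> L v),
               (exists v, L v /\ posv B v),
               (exists u, ~ L u) &
               forall g v, SU11 g -> L v -> L (rho g v)]])].

(* Main.v *)
Require Import Defs.
From HB Require Import structures.
From mathcomp Require Import all_boot all_order all_algebra.
From mathcomp Require Import complex.
From mathcomp Require Import reals exp.
From mathcomp Require Import ring lra.
Set Implicit Arguments. Unset Strict Implicit.
Import Order.TTheory GRing.Theory Num.Theory.
Local Open Scope ring_scope.
Local Open Scope complex_scope.

Lemma B0l (R : realType) (V : lmodType R[i]) (B : V -> V -> R[i])
  (hB : hermitian_form B) w : B 0 w = 0.
Proof.
case: hB => hl _; have := hl 1 0 0 w; rewrite scaler0 addr0 mul1r => /eqP; rewrite eq_sym.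
by rewrite -subr_eq0 addrK => /eqP.
Qed.

Lemma BDl (R : realType) (V : lmodType R[i]) (B : V -> V -> R[i])
  (hB : hermitian_form B) u v w : B (u + v) w = B u w + B v w.
Proof. by case: hB => hl _; have := hl 1 u v w; rewrite scale1r mul1r. Qed.

Lemma BZl (R : realType) (V : lmodType R[i]) (B : V -> V -> R[i])
  (hB : hermitian_form B) a u w : B (a *: u) w = a * B u w.
Proof.
have h0 := B0l hB w.
by case: hB => hl _; have := hl a u 0 w; rewrite addr0 h0 addr0.
Qed.

Lemma BNl (R : realType) (V : lmodType R[i]) (B : V -> V -> R[i])
  (hB : hermitian_form B) u w : B (- u) w = - B u w.
Proof. by rewrite -scaleN1r BZl // mulN1r. Qed.

Lemma BBl (R : realType) (V : lmodType R[i]) (B : V -> V -> R[i])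
  (hB : hermitian_form B) u v w : B (u - v) w = B u w - B v w.
Proof. by rewrite BDl // BNl. Qed.

Lemma Bsym (R : realType) (V : lmodType R[i]) (B : V -> V -> R[i])
  (hB : hermitian_form B) u w : B w u = (B u w)^*.
Proof. by case: hB => _ ->. Qed.

Lemma B0r (R : realType) (V : lmodType R[i]) (B : V -> V -> R[i])
  (hB : hermitian_form B) w : B w 0 = 0.
Proof. by rewrite Bsym // B0l // conjc0. Qed.

Lemma BDr (R : realType) (V : lmodType R[i]) (B : V -> V -> R[i])
  (hB : hermitian_form B) u v w : B w (u + v) = B w u + B w v.
Proof. by rewrite !(Bsym hB _ w) BDl // rmorphD. Qed.

Lemma BZr (R : realType) (V : lmodType R[i]) (B : V -> V -> R[i])
  (hB : hermitian_form B) a u w : B w (a *: u) = conjc a * B w u.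
Proof. by rewrite !(Bsym hB _ w) BZl // rmorphM. Qed.

Lemma BNr (R : realType) (V : lmodType R[i]) (B : V -> V -> R[i])
  (hB : hermitian_form B) u w : B w (- u) = - B w u.
Proof. by rewrite !(Bsym hB _ w) BNl // rmorphN. Qed.

Lemma BBr (R : realType) (V : lmodType R[i]) (B : V -> V -> R[i])
  (hB : hermitian_form B) u v w : B w (u - v) = B w u - B w v.
Proof. by rewrite BDr // BNr. Qed.

Lemma f0 (R : realType) (V : lmodType R[i]) (B : V -> V -> R[i]) f
  (hf : unitaryB B f) : f 0 = 0.
Proof.
case: hf => hl _ _; have := hl 1 0 0; rewrite scaler0 addr0 scale1r => /eqP; rewrite eq_sym.
by rewrite -subr_eq0 addrK => /eqP.
Qed.

Lemma fD (R : realType) (V : lmodType R[i]) (B : V -> V -> R[i]) f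
  (hf : unitaryB B f) u v : f (u + v) = f u + f v.
Proof. by case: hf => hl _ _; have := hl 1 u v; rewrite !scale1r. Qed.

Lemma fZ (R : realType) (V : lmodType R[i]) (B : V -> V -> R[i]) f
  (hf : unitaryB B f) a u : f (a *: u) = a *: f u.
Proof.
have h0 := f0 hf.
by case: hf => hl _ _; have := hl a u 0; rewrite !addr0 h0 addr0.
Qed.

Lemma fN (R : realType) (V : lmodType R[i]) (B : V -> V -> R[i]) f
  (hf : unitaryB B f) u : f (- u) = - f u.
Proof. by rewrite -scaleN1r (fZ hf) scaleN1r. Qed.

Lemma fB (R : realType) (V : lmodType R[i]) (B : V -> V -> R[i]) f
  (hf : unitaryB B f) u v : f (u - v) = f u - f v.
Proof. by rewrite (fD hf) (fN hf). Qed.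

Lemma fB2 (R : realType) (V : lmodType R[i]) (B : V -> V -> R[i]) f
  (hf : unitaryB B f) u v : B (f u) (f v) = B u v.
Proof. by case: hf => _ ->. Qed.

Lemma geomG (R : realType) (V : lmodType R[i]) (B : V -> V -> R[i]) (e eta : V)
  (hB : hermitian_form B)
  (hneg : forall w : V, B w e = 0 -> w != 0 -> B w w < 0)
  (hi : isotropic B eta) (v : V) :
  B v eta = 0 -> B v v <= 0 /\ (B v v = 0 -> exists tau, v = tau *: eta).
Proof.
case: hi => nz iso hv.
have bnz : B eta e != 0.
  apply/negP => /eqP h; have := hneg _ h nz; by rewrite iso ltxx.
set tau := B v e / B eta e.
set w := v - tau *: eta.
have we : B w e = 0.
  by rewrite /w BBl // BZl // /tau mulfVK // subrr.
have ww : B w w = B v v.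
  rewrite /w !(BBl hB) !(BBr hB) !(BZl hB) !(BZr hB) hv iso (Bsym hB v eta) hv.
  by rewrite conjc0 !mulr0 !subr0.
have [w0|wn0] := eqVneq w 0.
  split; first by rewrite -ww w0 B0l.
  by move=> _; exists tau; apply/eqP; rewrite -subr_eq0 -/w w0.
have := hneg _ we wn0; rewrite ww => hlt; split; first exact: ltW.
by move=> h; move: hlt; rewrite h ltxx.
Qed.

Lemma realC_eq0 (R : realType) (x : R) : (x%:C == 0 :> R[i]) = (x == 0).
Proof. by apply/eqP/eqP => [[]|->]. Qed.

Lemma realC_inj (R : realType) (x y : R) : x%:C = y%:C :> R[i] -> x = y.
Proof. by case. Qed.

Lemma realC_conj (R : realType) (x : R) : conjc (x%:C) = x%:C :> R[i].
Proof. by rewrite /= oppr0. Qed.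

Lemma realC_nat (R : realType) (n : nat) : (n%:R : R[i]) = (n%:R : R)%:C.
Proof. by rewrite rmorph_nat. Qed.

Lemma conjc_realM (R : realType) (x : R) (y : R[i]) :
  conjc (x%:C * y) = x%:C * conjc y.
Proof. by rewrite rmorphM; congr (_ * _); exact: realC_conj. Qed.

Theorem mainTheorem12 (R : realType) (V : lmodType R[i]) (B : V -> V -> R[i])
    (e : V) (rho : 'M[R[i]]_2 -> V -> V)
    (eta1 eta2 : V) (L : R -> R -> V -> V) (t : R) :
  sig1inf_space B e ->
  proj_rep B rho -> orbitally_continuous B rho -> irreducible_rep B e rho ->
  isotropic B eta1 -> isotropic B eta2 -> B eta1 eta2 = 1 ->
  (forall l b : R, 0 < l -> same_line eta1 (rho (gP l b) eta1)) ->
  (forall w : V, isotropic B w ->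
     (forall l b : R, 0 < l -> same_line w (rho (gP l b) w)) ->
     same_line eta1 w) ->
  (forall l : R, 0 < l ->
     (forall s : R, 0 < s -> exists2 s' : R, 0 < s' &
        same_line (rho (gP l 0) (eta1 + s%:C *: eta2)) (eta1 + s'%:C *: eta2)) /\
     (forall s' : R, 0 < s' -> exists2 s : R, 0 < s &
        same_line (rho (gP l 0) (eta1 + s%:C *: eta2)) (eta1 + s'%:C *: eta2))) ->
  (forall l b : R, 0 < l -> unitaryB B (L l b)) ->
  (forall l b : R, 0 < l -> exists2 c : R[i], c != 0 &
     forall v, L l b v = c *: rho (gP l b) v) ->
  (forall l b l' b' : R, 0 < l -> 0 < l' -> forall v,
     L (l * l') (l * b' + b / l') v = L l b (L l' b' v)) ->
  (forall (v : V) (l0 b0 : R), 0 < l0 -> forall eps : R, 0 < eps ->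
     exists2 del : R, 0 < del & forall l b : R, 0 < l ->
       `|l - l0| < del -> `|b - b0| < del ->
       hnorm B e (L l b v - L l0 b0 v) < eps) ->
  (forall l b : R, 0 < l -> 0 < B (L l b eta1) eta2) ->
  (forall l : R, 0 < l -> L l 0 eta1 = (l `^ t)%:C *: eta1) ->
  0 < t <= 2%:R.
Proof.
move=> Hsig _ _ _ Hi1 Hi2 H12 Hfix Huniq Haxis Hunit Hlift Hhom Hcont Hpos Hchi.
case: Hsig => hB _ hneg _.
have H21 : B eta2 eta1 = 1 by rewrite (Bsym hB) H12 conjc1.
have [nz1 iso1] := Hi1.
have [nz2 iso2] := Hi2.
have hU1 b : unitaryB B (L 1 b) := Hunit 1 b ltr01.
have Fid : forall v, L 1 0 v = v.
  move=> v; have := Hhom 1 0 1 0 ltr01 ltr01; rewrite mulr1 mulr0 mul0r addr0 => hh.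
  by case: (hU1 0) => _ _ /(_ v) [u <-]; rewrite -hh.
have Fadd : forall b c v, L 1 b (L 1 c v) = L 1 (b + c) v.
  move=> b c v; have := Hhom 1 b 1 c ltr01 ltr01 v.
  by rewrite mulr1 mul1r divr1 addrC => <-.
have Fconj : forall l b v, 0 < l -> L l 0 (L 1 b v) = L 1 (l * l * b) (L l 0 v).
  move=> l b v hl.
  rewrite -(Hhom l 0 1 b hl ltr01) -(Hhom 1 (l * l * b) l 0 ltr01 hl).
  have lnz : l != 0 by rewrite gt_eqF.
  congr (L _ _ v); first by rewrite mulr1 mul1r.
  by rewrite mul0r addr0 mulr0 add0r; field.
have HK : forall l b, 0 < l -> L l b eta1 = B (L l b eta1) eta2 *: eta1.
  move=> l b hl; have [c cnz ->] := Hlift l b hl.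
  have [c' [c'nz ->]] := Hfix l b hl.
  by rewrite scalerA BZl // H12 mulr1.
have Kscal : forall x y : R[i], x *: eta1 = y *: eta1 -> x = y.
  by move=> x y h; have := congr1 (B ^~ eta2) h; rewrite /= !BZl // H12 !mulr1.
have HK1 b : L 1 b eta1 = B (L 1 b eta1) eta2 *: eta1 := HK 1 b ltr01.
have Kpos b : 0 < B (L 1 b eta1) eta2 := Hpos 1 b ltr01.
have Kadd b c : B (L 1 (b + c) eta1) eta2 = B (L 1 b eta1) eta2 * B (L 1 c eta1) eta2.
  by rewrite -Fadd {1}HK1 (fZ (hU1 b)) BZl // mulrC.
have ptnz : forall l, 0 < l -> (l `^ t)%:C != 0.
  by move=> l hl; rewrite realC_eq0 gt_eqF // powR_gt0.
have Kconj : forall l b, 0 < l ->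
    B (L 1 (l * l * b) eta1) eta2 = B (L 1 b eta1) eta2.
  move=> l b hl; apply: (mulIf (ptnz l hl)).
  have := Fconj l b eta1 hl.
  rewrite Hchi // (fZ (hU1 _)) {1}HK1 (fZ (Hunit l 0 hl)) Hchi // => h.
  have := congr1 (B ^~ eta2) h; rewrite /= !BZl // H12 mulr1 => h'.
  by rewrite mulrC -h'.
have s2 : Num.sqrt 2 * Num.sqrt 2 * 1 = 2 :> R.
  by rewrite mulr1 -expr2 sqr_sqrtr.
have s2p : 0 < Num.sqrt 2 :> R by rewrite sqrtr_gt0.
have K1 : B (L 1 1 eta1) eta2 = 1.
  have h := Kconj _ 1 s2p; rewrite s2 in h.
  have h2 := Kadd 1 1; rewrite (_ : 1 + 1 = 2) // h in h2.
  have := Kpos 1; rewrite lt0r => /andP [hnz _].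
  by apply: (mulfI hnz); rewrite -h2 mulr1.
have Km1 : B (L 1 (-1) eta1) eta2 = 1.
  by have := Kadd (-1) 1; rewrite addNr Fid H12 K1 mulr1.
have n1e1 : L 1 1 eta1 = eta1 by rewrite HK1 K1 scale1r.
have nm1e1 : L 1 (-1) eta1 = eta1 by rewrite HK1 Km1 scale1r.
have Fadj : forall b x y, B (L 1 b x) y = B x (L 1 (-b) y).
  by move=> b x y; rewrite -[RHS](fB2 (hU1 b)) Fadd subrr Fid.
have Ha2 : forall l, 0 < l -> L l 0 eta2 = ((l `^ t)%:C)^-1 *: eta2.
  move=> l hl.
  have [h1 _] := Haxis l hl.
  have [s' hs' [c [cnz hc]]] := h1 1 ltr01.
  have [d dnz hd] := Hlift l 0 hl.
  have hU := Hunit l 0 hl.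
  rewrite rmorph1 scale1r in hc.
  have Pp : 0 < l `^ t by rewrite powR_gt0.
  have e0 : L l 0 eta1 + L l 0 eta2 = (d / c) *: (eta1 + s'%:C *: eta2).
    by rewrite -(fD hU) hd hc scalerA mulfVK.
  rewrite Hchi // in e0.
  have eX : L l 0 eta2 = (d / c - (l `^ t)%:C) *: eta1 + (d / c * s'%:C) *: eta2.
    move/(congr1 (fun z => z - (l `^ t)%:C *: eta1)): e0.
    rewrite /= (addrC ((l `^ t)%:C *: eta1)) addrK => ->.
    by rewrite scalerDr scalerA scalerBl addrAC.
  have hb1 : B (L l 0 eta2) ((l `^ t)%:C *: eta1) = 1.
    by rewrite -Hchi // (fB2 hU) H21.
  have hb2 : B (L l 0 eta2) (L l 0 eta2) = 0 by rewrite (fB2 hU) iso2.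
  rewrite eX in hb1 hb2 *.
  rewrite (BZr hB) (BDl hB) !(BZl hB) iso1 H21 realC_conj mulr0 add0r mulr1 in hb1.
  have Pnz : (l `^ t)%:C != 0 by rewrite realC_eq0 gt_eqF.
  have snz : s'%:C != 0 :> R[i] by rewrite realC_eq0 gt_eqF.
  have em : d / c = ((l `^ t * s')^-1)%:C.
    rewrite fmorphV rmorphM -[RHS]mulr1 -hb1; field.
    by rewrite cnz snz Pnz.
  rewrite em in hb2 *.
  rewrite !(BDl hB) !(BDr hB) !(BZl hB) !(BZr hB) iso1 iso2 H12 H21 in hb2.
  rewrite !mulr0 !mulr1 !addr0 !add0r -!rmorphM -!rmorphB !realC_conj -!rmorphM -!rmorphD in hb2.
  move/eqP: hb2; rewrite realC_eq0 => /eqP hb2.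
  have Pnz' : l `^ t != 0 by rewrite gt_eqF.
  have snz' : s' != 0 by rewrite gt_eqF.
  have ms : (l `^ t * s')^-1 * s' = (l `^ t)^-1.
    field. by rewrite Pnz' snz'.
  rewrite ms in hb2.
  have eP : (l `^ t * s')^-1 = l `^ t.
    have : ((l `^ t * s')^-1 - l `^ t) * (2 * (l `^ t)^-1) = 0.
      by rewrite -hb2; ring.
    move/eqP; rewrite mulf_eq0 => /orP [/eqP h|]; first by apply/eqP; rewrite -subr_eq0 h.
    by rewrite mulf_eq0 invr_eq0 (negbTE Pnz') orbF pnatr_eq0.
  by rewrite -rmorphM ms eP subrr scale0r add0r fmorphV.
have sqK : forall b : R, 0 <= b -> Num.sqrt b * Num.sqrt b = b.
  by move=> b hb; rewrite -expr2 sqr_sqrtr.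
have Fscale : forall l b, 0 < l -> B (L 1 (l * l * b) eta2) eta2 =
    (l `^ t)%:C * (l `^ t)%:C * B (L 1 b eta2) eta2.
  move=> l b hl; have hU := Hunit l 0 hl; have Pnz := ptnz l hl.
  have e2 : eta2 = L l 0 ((l `^ t)%:C *: eta2).
    by rewrite (fZ hU) Ha2 // scalerA mulfV // scale1r.
  have -> : L 1 (l * l * b) eta2 = (l `^ t)%:C *: L l 0 (L 1 b eta2).
    by rewrite Fconj // Ha2 // (fZ (hU1 _)) scalerA mulfV // scale1r.
  by rewrite (BZl hB) {2}e2 (fB2 hU) (BZr hB) realC_conj mulrA.
have fpos : forall b, 0 < b ->
    B (L 1 b eta2) eta2 = (b `^ t)%:C * B (L 1 1 eta2) eta2.
  move=> b hb; have sp : 0 < Num.sqrt b by rewrite sqrtr_gt0.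
  have := Fscale _ 1 sp; rewrite mulr1 sqK ?ltW // => ->.
  by rewrite -rmorphM -powRM ?sqrtr_ge0 // sqK ?ltW.
set w := B (L 1 1 eta2) eta2.
have fm1 : B (L 1 (-1) eta2) eta2 = conjc w by rewrite Fadj opprK (Bsym hB).
have f2 : B (L 1 2 eta2) eta2 = (2 `^ t)%:C * w by apply: fpos.
have Bu1e1 : B (L 1 1 eta2) eta1 = 1 by rewrite Fadj nm1e1 H21.
have Bum1e1 : B (L 1 (-1) eta2) eta1 = 1 by rewrite Fadj opprK n1e1 H21.
have isoL : forall b, B (L 1 b eta2) (L 1 b eta2) = 0.
  by move=> b; rewrite (fB2 (hU1 b)) iso2.
have Ge := geomG hB hneg Hi1.
have Bx1e : B (L 1 1 eta2 - eta2) eta1 = 0 by rewrite (BBl hB) Bu1e1 H21 subrr.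
have Bx1x1 : B (L 1 1 eta2 - eta2) (L 1 1 eta2 - eta2) = - (w + conjc w).
  rewrite (BBl hB) !(BBr hB) isoL iso2 (Bsym hB (L 1 1 eta2) eta2) -/w.
  by rewrite sub0r subr0 opprD.
have rpos : 0 <= w + conjc w.
  by have [h _] := Ge _ Bx1e; rewrite Bx1x1 oppr_le0 in h.
have HR0 : w + conjc w = 0 -> L 1 1 eta2 = eta2 + w *: eta1.
  move=> h0; have [_ h] := Ge _ Bx1e.
  have hz : B (L 1 1 eta2 - eta2) (L 1 1 eta2 - eta2) = 0 by rewrite Bx1x1 h0 oppr0.
  have [tau htau] := h hz.
  have hL : L 1 1 eta2 = eta2 + tau *: eta1 by rewrite -htau addrC subrK.
  have -> : w = tau by rewrite /w hL (BDl hB) (BZl hB) iso2 H12 mulr1 add0r.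
  exact: hL.
have ln2 : 0 < ln (2 : R) by apply: ln_gt0; lra.
have T1 : w + conjc w = 0 -> w != 0 -> t = 1.
  move=> h0 wnz; have hL := HR0 h0.
  have L12 : L 1 2 eta2 = eta2 + w *: eta1 + w *: eta1.
    have -> : (2 : R) = 1 + 1 by [].
    by rewrite -Fadd hL (fD (hU1 1)) (fZ (hU1 1)) hL n1e1.
  have h2 : (2 `^ t)%:C * w = 2%:R * w.
    rewrite -f2 L12 !(BDl hB) !(BZl hB) iso2 H12 mulr1 add0r.
    by rewrite mulr_natl mulr2n.
  have := mulIf wnz h2; rewrite realC_nat => /realC_inj h.
  have := congr1 (@ln R) h; rewrite ln_powR => h'.
  by apply: (mulIf (lt0r_neq0 ln2)); rewrite mul1r.
have Z : w != 0.
  apply/negP => /eqP w0.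
  have hz : w + conjc w = 0 by rewrite w0 conjc0 addr0.
  have hL := HR0 hz.
  rewrite w0 scale0r addr0 in hL.
  have nbpos : forall b, 0 < b -> L 1 b eta2 = eta2.
    move=> b hb; have sp : 0 < Num.sqrt b by rewrite sqrtr_gt0.
    have := Fconj _ 1 eta2 sp; rewrite hL Ha2 // (fZ (hU1 _)) mulr1 sqK ?ltW // => h.
    by apply: (scalerI (invr_neq0 (ptnz _ sp))); rewrite -h.
  have nb : forall b, L 1 b eta2 = eta2.
    move=> b; case: (ltgtP b 0) => hb; last by rewrite hb Fid.
      by rewrite -{1}(nbpos (-b)) ?oppr_gt0 // Fadd subrr Fid.
    exact: nbpos.
  have Lb : forall l b, 0 < l -> L l b eta2 = ((l `^ t)%:C)^-1 *: eta2.
    move=> l b hl; have := Hhom 1 (b * l) l 0 ltr01 hl eta2.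
    rewrite !mul1r add0r mulfK ?gt_eqF // => ->.
    by rewrite Ha2 // (fZ (hU1 _)) nb.
  have Hfix2 : forall l b, 0 < l -> same_line eta2 (rho (gP l b) eta2).
    move=> l b hl; have [c cnz hc] := Hlift l b hl.
    exists (c^-1 * ((l `^ t)%:C)^-1); split.
      by rewrite mulf_neq0 // invr_neq0 // ptnz.
    have := hc eta2; rewrite Lb // => h.
    by rewrite -scalerA h scalerA mulVf // scale1r.
  have [c [cnz hc]] := Huniq eta2 Hi2 Hfix2.
  move: H12; rewrite hc (BZr hB) iso1 mulr0 => /eqP; by rewrite eq_sym oner_eq0.
have tpos : 0 < t.
  rewrite ltNge; apply/negP => tle0.
  have r0 : w + conjc w = 0.
    apply/eqP/negPn/negP => rnz.
    have rgt : 0 < w + conjc w by rewrite lt_def rnz rpos.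
    have Rep : 0 < complex.Re (w + conjc w).
      by move: rgt; rewrite ltcE => /andP [_].
    have [del hdel Hc] := Hcont eta2 1 0 ltr01 (Num.sqrt (complex.Re (w + conjc w)))
      (ltac:(by rewrite sqrtr_gt0)).
    set b := del / (del + 1).
    have d1 : 0 < del + 1 by rewrite addr_gt0.
    have bpos : 0 < b by rewrite divr_gt0.
    have ble1 : b <= 1 by rewrite ler_pdivrMr // mul1r lerDl ltW.
    have bdel : `|b - 0| < del.
      rewrite subr0 ger0_norm ?ltW // ltr_pdivrMr //; nra.
    have := Hc 1 b ltr01 (ltac:(by rewrite subrr normr0)) bdel.
    rewrite Fid.
    set x := L 1 b eta2 - eta2 => hn.
    have Bxx : B x x = - ((b `^ t)%:C * (w + conjc w)).
      rewrite /x (BBl hB) !(BBr hB) isoL iso2 (Bsym hB (L 1 b eta2) eta2) fpos //.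
      rewrite conjc_realM -/w; ring.
    have b1 : 1 <= b `^ t.
      have := @ger_powR _ b (ltac:(by rewrite bpos ble1)) t 0 tle0.
      by rewrite powRr0.
    have hip_ge : w + conjc w <= hip B e x x.
      rewrite /hip Bxx opprK -[X in X <= _]add0r; apply: lerD.
        by rewrite -mulrA; apply: mulr_ge0 => //; exact: mulcJ_ge0.
      rewrite -[X in X <= _]mul1r; apply: ler_wpM2r => //.
      by rewrite lecE /= eqxx b1.
    have Re_ge : complex.Re (w + conjc w) <= complex.Re (hip B e x x).
      by move: hip_ge; rewrite lecE => /andP [_].
    move: hn; rewrite /hnorm ltr_sqrt // => hn.
    by move: Re_ge; rewrite leNgt hn.
  have t1 := T1 r0 Z.
  by move: tle0; rewrite t1 ler10.
have tle2 : t <= 2%:R.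
  rewrite leNgt; apply/negP => tgt2.
  have [r0|rnz] := eqVneq (w + conjc w) 0.
    have t1 := T1 r0 Z.
    by move: tgt2; rewrite t1 ltNge ler1n.
  have rgt : 0 < w + conjc w by rewrite lt_def rnz rpos.
  set v := L 1 (-1) eta2 - 2%:R *: eta2 + L 1 1 eta2.
  have Bve : B v eta1 = 0.
    rewrite /v !(BDl hB) (BNl hB) (BZl hB) Bum1e1 Bu1e1 H21 mulr1.
    ring.
  have Bu1um1 : B (L 1 1 eta2) (L 1 (-1) eta2) = (2 `^ t)%:C * w.
    have e12 : (- 1 + - 1 : R) = - 2 by rewrite -opprD.
    rewrite Fadj Fadd e12 (Bsym hB) Fadj opprK (Bsym hB (L 1 2 eta2) eta2) conjcK f2.
    done.
  have Bum1u1 : B (L 1 (-1) eta2) (L 1 1 eta2) = (2 `^ t)%:C * conjc w.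
    by rewrite (Bsym hB (L 1 1 eta2)) Bu1um1 conjc_realM.
  have ea : B eta2 (L 1 1 eta2) = conjc w by rewrite (Bsym hB (L 1 1 eta2) eta2).
  have eb : B eta2 (L 1 (-1) eta2) = w.
    by rewrite (Bsym hB (L 1 (-1) eta2) eta2) fm1 conjcK.
  have c2 : conjc (2%:R : R[i]) = 2%:R by rewrite conjc_nat.
  have Bvv : B v v = ((2 `^ t)%:C - 4%:R) * (w + conjc w).
    rewrite /v !(BDl hB) !(BNl hB) !(BDr hB) !(BNr hB) !(BZl hB) !(BZr hB).
    rewrite !isoL iso2 Bu1um1 Bum1u1 fm1 ea eb c2 -/w.
    ring.
  have [hle _] := Ge _ Bve; rewrite Bvv in hle.
  have c4r : (4 : R) < 2 `^ t.
    have e4 : (2:R) `^ 2%:R = 4 by rewrite powR_mulrn // expr2 -natrM.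
    rewrite -e4 -ltr_ln ?posrE ?powR_gt0 // !ln_powR.
    by rewrite ltr_pM2r.
  have c4 : 4%:R < (2 `^ t)%:C by rewrite realC_nat ltcR.
  have c4' : 0 < (2 `^ t)%:C - 4%:R by rewrite subr_gt0.
  have := mulr_gt0 c4' rgt.
  by move=> /lt_geF; rewrite hle.
by rewrite tpos tle2.
Qed.
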